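(* Let $\ket{\psi}$ be a pure state on a tripartite system $ABC$. Let a quantum instrument (measurement channel) $\mathcal{N}$ with Kraus operators $\{M_i\}_{i=1}^k$ acting on $B$ ($\sum_i M_i^\dagger M_i=I$) be applied, recording the outcome in a classical register $X$, giving the state $\rho_{A\mathcal{N}[B]C}=\sum_i p_i \ket{\psi_i}\bra{\psi_i}\otimes\ket{i}\bra{i}_X$ with $p_i=\|M_i\ket{\psi}\|^2$, $\ket{\psi_i}=M_i\ket{\psi}/\sqrt{p_i}$. Let $\delta I=I(A:C|\mathcal{N}[B])-I(A:C|B)$ (first term in $\rho_{A\mathcal{N}[B]C}$, second in $\ket{\psi}$). Then $$\delta I\le S(A\,\mathcal{N}[B]\,C),$$ and moreover $S(A\,\mathcal{N}[B]\,C)=-\sum_{i}p_i\log p_i$ is the Shannon entropy of the measurement outcome distribution.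
   Context: The quantum conditional mutual information is $I(A:C|B)=S(AB)+S(BC)-S(B)-S(ABC)$ with von Neumann entropies. $\mathcal{N}[B]$ denotes $B$ together with the classical register $X$ (orthonormal basis $\{\ket{i}\}$), and $S(A\,\mathcal{N}[B]\,C)$ is the von Neumann entropy of $\rho_{A\mathcal{N}[B]C}$. *)

(* Defs.v *)
From mathcomp Require Import all_boot all_algebra spectral.
From mathcomp.real_closed Require Import complex.
From mathcomp Require Import reals exp.
Set Implicit Arguments. Unset Strict Implicit. Unset Printing Implicit Defensive.
Import GRing.Theory Num.Theory.
Local Open Scope ring_scope.

Section QInfo.
Variable R : realType.
Local Notation C := (R[i]).

(* A (finite-dimensional) operator on the Hilbert space with orthonormal
   basis indexed by the finite type T, given by its matrix entries. *)
Definition op (T : finType) := T -> T -> C.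

Definition opmx (T : finType) (rho : op T) : 'M[C]_#|T| :=
  \matrix_(i, j) rho (enum_val i) (enum_val j).

(* Von Neumann entropy S(rho) = - sum_l l ln l over the eigenvalues l of rho
   (spectral decomposition of the normal matrix opmx rho); 0 ln 0 = 0. *)
Definition vN_entropy (T : finType) (rho : op T) : R :=
  - \sum_(j < #|T|)
      (complex.Re (spectral_diag (opmx rho) 0 j) *
       ln (complex.Re (spectral_diag (opmx rho) 0 j))).

Definition ptr_XY (X Y Z : finType) (rho : op (X * Y * Z)%type) : op (X * Y)%type :=
  fun u v => \sum_(z : Z) rho (u, z) (v, z).
Definition ptr_YZ (X Y Z : finType) (rho : op (X * Y * Z)%type) : op (Y * Z)%type :=
  fun u v => \sum_(x : X) rho (x, u.1, u.2) (x, v.1, v.2).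
Definition ptr_Y (X Y Z : finType) (rho : op (X * Y * Z)%type) : op Y :=
  fun u v => \sum_(x : X) \sum_(z : Z) rho (x, u, z) (x, v, z).

Definition qcmi (X Y Z : finType) (rho : op (X * Y * Z)%type) : R :=
  vN_entropy (ptr_XY rho) + vN_entropy (ptr_YZ rho)
  - vN_entropy (ptr_Y rho) - vN_entropy rho.

Definition ketbra (T : finType) (psi : T -> C) : op T :=
  fun s t => psi s * (psi t)^*.

Definition apply_kraus (A B Cs : finType) (k : nat) (M : 'I_k -> op B)
    (psi : (A * B * Cs)%type -> C) (i : 'I_k) : (A * B * Cs)%type -> C :=
  fun t => \sum_(b0 : B) M i t.1.2 b0 * psi (t.1.1, b0, t.2).

Definition outcome_prob (A B Cs : finType) (k : nat) (M : 'I_k -> op B)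
    (psi : (A * B * Cs)%type -> C) (i : 'I_k) : R :=
  complex.Re (\sum_(t : (A * B * Cs)%type) `|apply_kraus M psi i t| ^+ 2).

(* The state rho_{A N[B] C} = sum_i p_i |psi_i><psi_i| (x) |i><i|_X
   = sum_i M_i|psi><psi|M_i^dagger (x) |i><i|_X, where N[B] = B * X and
   the classical register X has basis 'I_k. *)
Definition post_meas_state (A B Cs : finType) (k : nat) (M : 'I_k -> op B)
    (psi : (A * B * Cs)%type -> C) : op (A * (B * 'I_k) * Cs)%type :=
  fun s t =>
    if s.1.2.2 == t.1.2.2 then
      apply_kraus M psi s.1.2.2 (s.1.1, s.1.2.1, s.2) *
      (apply_kraus M psi t.1.2.2 (t.1.1, t.1.2.1, t.2))^*
    else 0.

End QInfo.

(* Main.v *)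
Require Import Defs.
From mathcomp Require Import all_boot all_algebra spectral.
From mathcomp.real_closed Require Import complex.
From mathcomp Require Import reals exp.
From mathcomp Require Import ring lra order.
Import GRing.Theory Num.Theory.
Local Open Scope ring_scope.

Module Helpers.
Local Open Scope ring_scope.
Set Implicit Arguments. Unset Strict Implicit. Unset Printing Implicit Defensive.

Import Order.TTheory GRing.Theory Num.Theory.

Section Sylv.
Variable F : comNzRingType.

Lemma sylvester m n (A : 'M[F]_(m,n)) (B : 'M[F]_(n,m)) :
  'X^n * char_poly (A *m B) = 'X^m * char_poly (B *m A).
Proof.
set a := map_mx polyC A; set b := map_mx polyC B.
pose N := block_mx ('X%:M : 'M_m) a b (1%:M : 'M_n).
pose L1 := block_mx (1%:M : 'M_m) (-a) 0 (1%:M : 'M_n).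
pose L2 := block_mx (1%:M : 'M_m) 0 (-b) ('X%:M : 'M_n).
have h1 : L1 *m N = block_mx ('X%:M - a *m b) 0 b 1%:M.
  rewrite /L1 /N mulmx_block !mul1mx !mul0mx !add0r mulNmx mulmx1.
  by rewrite subrr.
have h2 : L2 *m N = block_mx 'X%:M a 0 ('X%:M - b *m a).
  rewrite /L2 /N mulmx_block !mul1mx !mul0mx !addr0 mulNmx mulmx1.
  rewrite mul_mx_scalar mul_scalar_mx addNr mulNmx; congr block_mx.
  by rewrite addrC.
have dN : \det N = char_poly (A *m B).
  have := congr1 determinant h1.
  rewrite det_mulmx det_ublock det_lblock !det1 mul1r mulr1 mul1r => ->.
  by rewrite /char_poly /char_poly_mx map_mxM.
have := congr1 determinant h2.
rewrite det_mulmx det_lblock det_ublock det1 mul1r !det_scalar dN => ->.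
by rewrite /char_poly /char_poly_mx map_mxM.
Qed.

End Sylv.

Import Order.TTheory GRing.Theory Num.Theory.

Section Spec2.
Variable C : numClosedFieldType.
Local Open Scope sesquilinear_scope.

Lemma charpoly_normal n (M : 'M[C]_n) : M \is normalmx ->
  char_poly M = \prod_(j < n) ('X - (spectral_diag M 0 j)%:P).
Proof.
move=> /orthomx_spectralP E.
have Pu : spectralmx M \in unitmx := spectral_unit M.
have Xn0 : ('X^n : {poly C}) != 0 by rewrite monic_neq0 ?monicXn.
have := sylvester (invmx (spectralmx M) *m diag_mx (spectral_diag M)) (spectralmx M).
rewrite -E mulmxA mulmxV // mul1mx => /(mulfI Xn0) ->.
rewrite char_poly_trig; last exact/is_diag_mx_is_trig/diag_mx_is_diag.
by apply: eq_bigr => j _; rewrite mxE eqxx mulr1n.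
Qed.

Lemma prod_map_ord k (g : 'I_k -> C) :
  \prod_(x <- [seq g j | j <- enum 'I_k]) ('X - x%:P) = \prod_(j < k) ('X - (g j)%:P).
Proof. by rewrite big_map big_enum. Qed.

Lemma spec_sum_seq (V : zmodType) n k (M : 'M[C]_n) (s : seq C) (f : C -> V) :
  f 0 = 0 -> M \is normalmx ->
  'X^k * char_poly M = \prod_(x <- s) ('X - x%:P) ->
  \sum_(j < n) f (spectral_diag M 0 j) = \sum_(x <- s) f x.
Proof.
move=> f0 nM; rewrite !charpoly_normal // => E.
pose s1 := [seq spectral_diag M 0 j | j <- enum 'I_n] ++ [seq (0:C) | j <- enum 'I_k].
have Ps : perm_eq s1 s.
  apply: prod_XsubC_eq; rewrite !big_cat !prod_map_ord /= !subr0 !prodr_const !card_ord.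
  by rewrite mulrC E.
have : \sum_(x <- s1) f x = \sum_(x <- s) f x by apply: perm_big.
have h0 : \sum_(x <- [seq (0:C) | _ <- enum 'I_k]) f x = 0.
  by rewrite big1_seq // => x /mapP [? _ ->].
rewrite !big_cat /= !h0 !addr0 !big_map => h; exact: h.
Qed.

Lemma spec_sum (V : zmodType) n m (M : 'M[C]_n) (N : 'M[C]_m) (f : C -> V) :
  f 0 = 0 -> M \is normalmx -> N \is normalmx ->
  'X^m * char_poly M = 'X^n * char_poly N ->
  \sum_(j < n) f (spectral_diag M 0 j) = \sum_(j < m) f (spectral_diag N 0 j).
Proof.
move=> f0 nM nN; rewrite !charpoly_normal // => E.
pose s1 := [seq spectral_diag M 0 j | j <- enum 'I_n] ++ [seq (0:C) | j <- enum 'I_m].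
pose s2 := [seq spectral_diag N 0 j | j <- enum 'I_m] ++ [seq (0:C) | j <- enum 'I_n].
have Ps : perm_eq s1 s2.
  apply: prod_XsubC_eq; rewrite !big_cat !prod_map_ord /= !subr0 !prodr_const !card_ord.
  by rewrite mulrC E mulrC.
have : \sum_(x <- s1) f x = \sum_(x <- s2) f x by apply: perm_big.
have h0 k : \sum_(x <- [seq (0:C) | _ <- enum 'I_k]) f x = 0.
  by rewrite big1_seq // => x /mapP [? _ ->].
rewrite !big_cat /= !h0 !addr0 !big_map => h; exact: h.
Qed.

End Spec2.

Import Order.TTheory GRing.Theory Num.Theory.

Section Ops.
Variable R : realType.
Local Notation C := (R[i]).
Local Open Scope sesquilinear_scope.

Lemma sum_enum_val (V : zmodType) (T : finType) (F : T -> V) :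
  \sum_(t : T) F t = \sum_(i < #|T|) F (enum_val i).
Proof.
by rewrite (reindex (@enum_val T T)) //; exact: onW_bij (enum_val_bij T).
Qed.

Definition outer (K T : finType) (v : K -> T -> C) : op R T :=
  fun s t => \sum_k v k s * (v k t)^*.
Definition gram (K T : finType) (v : K -> T -> C) : op R K :=
  fun k k' => \sum_t (v k t)^* * v k' t.
Definition vmx (K T : finType) (v : K -> T -> C) : 'M[C]_(#|T|, #|K|) :=
  \matrix_(j, l) v (enum_val l) (enum_val j).

Definition eta (x : R) := x * ln x.

Lemma vN_ext (T : finType) (rho sigma : op R T) :
  (forall s t, rho s t = sigma s t) -> vN_entropy rho = vN_entropy sigma.
Proof.
move=> E; rewrite /vN_entropy.
have -> : opmx rho = opmx sigma by apply/matrixP=> i j; rewrite !mxE.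
by [].
Qed.

Lemma opmx_outer (K T : finType) (v : K -> T -> C) :
  opmx (outer v) = vmx v *m (vmx v)^t*.
Proof.
apply/matrixP=> i j; rewrite !mxE /outer sum_enum_val.
by apply: eq_bigr => l _; rewrite !mxE.
Qed.

Lemma opmx_gram (K T : finType) (v : K -> T -> C) :
  opmx (gram v) = (vmx v)^t* *m vmx v.
Proof.
apply/matrixP=> i j; rewrite !mxE /gram sum_enum_val.
by apply: eq_bigr => l _; rewrite !mxE.
Qed.

Lemma normal_AAt m n (A : 'M[C]_(m, n)) : A *m A^t* \is normalmx.
Proof.
apply/normalmxP.
have -> : (A *m A^t*)^t* = A *m A^t*.
  by rewrite trmx_mul map_mxM trmxCK.
by [].
Qed.

Lemma ent_outer_gram (K T : finType) (v : K -> T -> C) :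
  vN_entropy (outer v) = vN_entropy (gram v).
Proof.
rewrite /vN_entropy opmx_outer opmx_gram; congr (- _).
apply: (spec_sum (f := fun x : C => complex.Re x * ln (complex.Re x))).
- by rewrite /= mul0r.
- exact: normal_AAt.
- by have := normal_AAt ((vmx v)^t*); rewrite trmxCK.
- exact: sylvester.
Qed.

Lemma ent_diag (T : finType) (d : T -> C) :
  vN_entropy (fun s t => (s == t)%:R * d s) = - \sum_t eta (complex.Re (d t)).
Proof.
rewrite /vN_entropy; congr (- _).
pose r : 'rV[C]_#|T| := \row_j d (enum_val j).
have -> : opmx (fun s t => (s == t)%:R * d s) = diag_mx r.
  apply/matrixP=> i j; rewrite !mxE (inj_eq enum_val_inj).
  by case: eqP => [->|]; rewrite ?mul1r ?mul0r ?mulr1n ?mulr0n.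
rewrite (spec_sum_seq (k := 0) (s := [seq d (enum_val j) | j <- enum 'I_#|T|])
   (f := fun x : C => complex.Re x * ln (complex.Re x))).
- by rewrite big_map sum_enum_val big_enum.
- by rewrite /= mul0r.
- by apply/normalmxP; rewrite tr_diag_mx map_diag_mx diag_mxC.
- rewrite expr0 mul1r char_poly_trig; last exact/is_diag_mx_is_trig/diag_mx_is_diag.
  rewrite prod_map_ord; apply: eq_bigr => j _.
  by rewrite !mxE eqxx mulr1n.
Qed.

End Ops.

Import Order.TTheory GRing.Theory Num.Theory.

Section Spec4.
Variable R : realType.
Local Notation C := (R[i]).
Local Open Scope sesquilinear_scope.

Definition herm (T : finType) (rho : op R T) := forall s t, rho t s = (rho s t)^*.
Definition evec (T : finType) (rho : op R T) (l : 'I_#|T|) (t : T) : C :=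
  ((spectralmx (opmx rho)) l (enum_rank t))^*.
Definition evl (T : finType) (rho : op R T) (l : 'I_#|T|) : C :=
  spectral_diag (opmx rho) 0 l.

Lemma herm_normal (T : finType) (rho : op R T) : herm rho -> opmx rho \is normalmx.
Proof.
move=> h; apply/normalmxP.
have -> : (opmx rho)^t* = opmx rho by apply/matrixP=> i j; rewrite !mxE h conjCK.
by [].
Qed.

Lemma spec_decomp (T : finType) (rho : op R T) : herm rho ->
  forall s t, rho s t = \sum_l evl rho l * evec rho l s * (evec rho l t)^*.
Proof.
move=> /herm_normal /orthomx_spectralP E s t.
have := congr1 (fun M : 'M[C]_#|T| => M (enum_rank s : 'I_#|T|) (enum_rank t : 'I_#|T|)) E.
rewrite !mxE !enum_rankK => ->.
rewrite invmx_unitary ?spectral_unitarymx // mul_mx_diag.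
apply: eq_bigr => l _; rewrite /evec /evl.
move: (enum_rank s) (enum_rank t) => i j; rewrite !mxE conjCK; ring.
Qed.

Lemma evec_orth (T : finType) (rho : op R T) l l' :
  \sum_t (evec rho l t)^* * evec rho l' t = (l == l')%:R.
Proof.
have := congr1 (fun M : 'M[C]_#|T| => M l l') (unitarymxP (spectral_unitarymx (opmx rho))).
rewrite !mxE => <-; rewrite sum_enum_val.
by apply: eq_bigr => j _; rewrite /evec enum_valK !mxE conjCK.
Qed.

Lemma evec_compl (T : finType) (rho : op R T) s t :
  \sum_l evec rho l s * (evec rho l t)^* = (s == t)%:R.
Proof.
have U := unitarymxP (spectral_unitarymx (opmx rho)).
have := congr1 (fun M : 'M[C]_#|T| => M (enum_rank s : 'I_#|T|) (enum_rank t : 'I_#|T|)) (mulmx1C U).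
rewrite !mxE (inj_eq enum_rank_inj) => <-.
by apply: eq_bigr => j _; rewrite /evec !mxE conjCK.
Qed.

Definition ip (T : finType) (f g : T -> C) := \sum_t (f t)^* * g t.
Definition quad (T : finType) (rho : op R T) (f g : T -> C) :=
  \sum_s \sum_t (f s)^* * rho s t * g t.

Lemma quad_sum (L T : finType) (lam : L -> C) (w : L -> T -> C) (f g : T -> C) :
  quad (fun s t => \sum_l lam l * w l s * (w l t)^*) f g
  = \sum_l lam l * ip f (w l) * ip (w l) g.
Proof.
rewrite [RHS](eq_bigr (fun l => \sum_s \sum_t lam l * ((f s)^* * w l s) * ((w l t)^* * g t))); last first.
  move=> l _; rewrite /ip -mulrA big_distrlr mulr_sumr; apply: eq_bigr => s _.
  by rewrite mulr_sumr; apply: eq_bigr => t _; rewrite /=; ring.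
rewrite /quad; symmetry.
rewrite exchange_big; apply: eq_bigr => s _; rewrite exchange_big; apply: eq_bigr => t _.
by rewrite mulr_sumr mulr_suml; apply: eq_bigr => l _; ring.
Qed.

Lemma sum_delta (I : finType) (F : I -> C) j : \sum_i (i == j)%:R * F i = F j.
Proof.
rewrite (bigD1 j) //= eqxx mul1r big1 ?addr0 // => i /negPf ->; by rewrite mul0r.
Qed.

Lemma ipC (T : finType) (f g : T -> C) : ip g f = (ip f g)^*.
Proof.
by rewrite /ip rmorph_sum; apply: eq_bigr => t _; rewrite rmorphM /= conjCK mulrC.
Qed.

Lemma herm_outer (K T : finType) (v : K -> T -> C) : herm (outer v).
Proof.
by move=> s t; rewrite /outer rmorph_sum; apply: eq_bigr => k _; rewrite rmorphM /= conjCK mulrC.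
Qed.

Lemma opmx_ext (T : finType) (rho sigma : op R T) :
  (forall s t, rho s t = sigma s t) -> opmx rho = opmx sigma.
Proof. by move=> E; apply/matrixP=> i j; rewrite !mxE. Qed.

Lemma quad_evl (T : finType) (rho : op R T) l : herm rho ->
  quad rho (evec rho l) (evec rho l) = evl rho l.
Proof.
move=> h; rewrite /quad.
rewrite (eq_bigr (fun s => \sum_t (evec rho l s)^* * (\sum_l' evl rho l' * evec rho l' s * (evec rho l' t)^*) * evec rho l t)); last first.
  by move=> s _; apply: eq_bigr => t _; rewrite -spec_decomp.
have := quad_sum (evl rho) (evec rho) (evec rho l) (evec rho l); rewrite /quad => ->.
rewrite (eq_bigr (fun l' => (l' == l)%:R * evl rho l')); first by rewrite sum_delta.
move=> l' _; rewrite /ip !evec_orth eq_sym.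
by case: eqP => _; rewrite ?mulr1 ?mulr0 ?mul0r ?mul1r.
Qed.

Lemma evl_outer (K T : finType) (v : K -> T -> C) l :
  evl (outer v) l = \sum_k `|ip (evec (outer v) l) (v k)| ^+ 2.
Proof.
rewrite -quad_evl; last exact: herm_outer.
have := quad_sum (fun _ => 1) v (evec (outer v) l) (evec (outer v) l).
have -> : quad (fun s t => \sum_k (fun _ => 1) k * v k s * (v k t)^*) (evec (outer v) l) (evec (outer v) l) = quad (outer v) (evec (outer v) l) (evec (outer v) l).
  by rewrite /quad /outer; apply: eq_bigr => s _; apply: eq_bigr => t _; congr (_ * _ * _); apply: eq_bigr => k _; rewrite mul1r.
move=> ->; apply: eq_bigr => k _; by rewrite mul1r normCK ipC conjCK.
Qed.

Lemma evl_outer_ge0 (K T : finType) (v : K -> T -> C) l : 0 <= evl (outer v) l.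
Proof. by rewrite evl_outer; apply: sumr_ge0 => k _; rewrite exprn_ge0. Qed.

Lemma ge0_ReE (x : C) : 0 <= x -> x = ((complex.Re x)%:C)%C.
Proof. by case: x => a b; rewrite lecE /= => /andP [/eqP -> _]. Qed.

Lemma ge0_Re (x : C) : 0 <= x -> 0 <= complex.Re x.
Proof. by case: x => a b; rewrite lecE /= => /andP [_ ->]. Qed.

Lemma ent_orth (L T : finType) (lam : L -> C) (w : L -> T -> C) :
  (forall l, 0 <= lam l) -> (forall l l', ip (w l) (w l') = (l == l')%:R) ->
  vN_entropy (fun s t => \sum_l lam l * w l s * (w l t)^*) = - \sum_l eta (complex.Re (lam l)).
Proof.
move=> lam0 orth.
pose y l t := sqrtC (lam l) * w l t.
rewrite (vN_ext (sigma := outer y)); last first.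
  move=> s t; apply: eq_bigr => l _; rewrite /y rmorphM /= [(sqrtC _)^*]geC0_conj ?sqrtC_ge0 //.
  by rewrite -{1}[lam l]sqrtCK; ring.
rewrite ent_outer_gram (vN_ext (sigma := fun l l' => (l == l')%:R * lam l)) ?ent_diag //.
move=> l l'; rewrite /gram /y.
rewrite (eq_bigr (fun t => (sqrtC (lam l))^* * sqrtC (lam l') * ((w l t)^* * w l' t))); last first.
  by move=> t _; rewrite rmorphM; ring.
rewrite -mulr_sumr -/(ip (w l) (w l')) orth geC0_conj ?sqrtC_ge0 //.
case: eqP => [->|_]; rewrite ?mulr1 ?mulr0 ?mul0r ?mul1r //.
by rewrite -expr2 sqrtCK.
Qed.

End Spec4.

Import Order.TTheory GRing.Theory Num.Theory.

Section Scalar.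
Variable R : realType.

Lemma sum_pair (V : zmodType) (I J : finType) (F : I * J -> V) :
  \sum_p F p = \sum_i \sum_j F (i, j).
Proof. by rewrite pair_bigA; apply: eq_bigr => -[]. Qed.

Lemma key_ineq (x y : R) : 0 <= x -> 0 < y -> x * ln y - x * ln x <= y - x.
Proof.
rewrite le_eqVlt => /orP [/eqP <- | x0] y0; first by rewrite !mul0r subrr subr0 ltW.
have hx : x \is Num.pos by rewrite posrE.
have hy : y \is Num.pos by rewrite posrE.
have : ln (1 + (y / x - 1)) <= y / x - 1.
  by apply: le_ln1Dx; have := divr_gt0 y0 x0; lra.
have -> : 1 + (y / x - 1) = y / x by ring.
rewrite ln_div // => h.
have := ler_wpM2l (ltW x0) h.
rewrite mulrBr mulrBr mulr1 mulrCA divff ?mulr1 //; exact: lt0r_neq0.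
Qed.

Lemma le_sum_ge0 (I : finType) (F : I -> R) j : (forall i, 0 <= F i) -> F j <= \sum_i F i.
Proof.
move=> h; rewrite (bigD1 j) //= lerDl; exact: sumr_ge0.
Qed.

Lemma jensen (J : finType) (w x : J -> R) :
  (forall j, 0 <= w j) -> (forall j, 0 <= x j) -> \sum_j w j = 1 ->
  eta (\sum_j w j * x j) <= \sum_j w j * eta (x j).
Proof.
move=> w0 x0 w1; set m := \sum_j w j * x j.
have m0 : 0 <= m by apply: sumr_ge0 => j _; exact: mulr_ge0.
move: m0; rewrite le_eqVlt => /orP [/eqP m0 | mpos].
  have z j : w j * x j = 0.
    apply: (psumr_eq0P (P := fun _ => true) (F := fun j => w j * x j)) => //.
    by move=> i _; exact: mulr_ge0.
  rewrite /eta -m0 mul0r; apply: sumr_ge0 => j _.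
  by rewrite mulrA z mul0r.
have h j : w j * (x j * ln m) - w j * eta (x j) <= w j * (m - x j).
  by rewrite -mulrBr; apply: ler_wpM2l => //; exact: key_ineq.
have : \sum_j (w j * (x j * ln m) - w j * eta (x j)) <= \sum_j w j * (m - x j).
  by apply: ler_sum => j _; exact: h.
rewrite sumrB.
have e1 : \sum_i w i * (x i * ln m) = m * ln m.
  rewrite (eq_bigr (fun i => w i * x i * ln m)); last by move=> i _; rewrite mulrA.
  by rewrite -mulr_suml.
have e2 : \sum_j w j * (m - x j) = 0.
  rewrite (eq_bigr (fun j => m * w j - w j * x j)); last by move=> j _; rewrite mulrBr mulrC.
  by rewrite sumrB -mulr_sumr w1 mulr1 subrr.
by rewrite e1 e2 subr_le0.
Qed.

Lemma subadd (I J : finType) (d : I -> J -> R) :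
  (forall i j, 0 <= d i j) -> \sum_i \sum_j d i j = 1 ->
  \sum_i eta (\sum_j d i j) + \sum_j eta (\sum_i d i j) <= \sum_i \sum_j eta (d i j).
Proof.
move=> d0 d1; pose p i := \sum_j d i j; pose q j := \sum_i d i j.
have p0 i : 0 <= p i by apply: sumr_ge0.
have q0 j : 0 <= q j by apply: sumr_ge0.
have T i j : d i j * ln (p i) + d i j * ln (q j) - eta (d i j) <= p i * q j - d i j.
  move: (d0 i j); rewrite le_eqVlt => /orP [/eqP <- | dpos].
    by rewrite /eta !mul0r !addr0 !subr0; exact: mulr_ge0.
  have pp : 0 < p i by apply: lt_le_trans dpos _; exact: le_sum_ge0.
  have qp : 0 < q j by apply: lt_le_trans dpos _; exact: (le_sum_ge0 (F := fun i => d i j)).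
  rewrite -mulrDr -lnM ?posrE //; apply: key_ineq; [exact: ltW | exact: mulr_gt0].
have : \sum_i \sum_j (d i j * ln (p i) + d i j * ln (q j) - eta (d i j)) <= \sum_i \sum_j (p i * q j - d i j).
  by apply: ler_sum => i _; apply: ler_sum => j _; exact: T.
have q1 : \sum_j q j = 1 by rewrite /q exchange_big.
have e1 : \sum_i \sum_j (p i * q j - d i j) = 0.
  rewrite (eq_bigr (fun i => p i * \sum_j q j - p i)); last first.
    by move=> i _; rewrite sumrB -mulr_sumr.
  by rewrite sumrB -mulr_suml q1 mulr1 subrr.
have e2 : \sum_i \sum_j (d i j * ln (p i) + d i j * ln (q j) - eta (d i j))
   = \sum_i eta (p i) + \sum_j eta (q j) - \sum_i \sum_j eta (d i j).
  rewrite (eq_bigr (fun i => eta (p i) + \sum_j d i j * ln (q j) - \sum_j eta (d i j))); last first.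
    by move=> i _; rewrite sumrB big_split /= /eta -mulr_suml.
  rewrite sumrB big_split /=; congr (_ + _ - _).
  rewrite exchange_big; apply: eq_bigr => j _.
  by rewrite /eta -mulr_suml.
by rewrite e1 e2 subr_le0.
Qed.

End Scalar.

Import Order.TTheory GRing.Theory Num.Theory.

Section DJ.
Variable R : realType.
Local Notation C := (R[i]).

Lemma ReD (x y : C) : complex.Re (x + y) = complex.Re x + complex.Re y.
Proof. by case: x; case: y. Qed.

Lemma Re_sum (I : finType) (F : I -> C) :
  complex.Re (\sum_i F i) = \sum_i complex.Re (F i).
Proof. exact: (big_morph _ ReD). Qed.

Lemma ReM_real (a b : R) : complex.Re (((a%:C)%C : C) * (b%:C)%C) = a * b.
Proof. by rewrite /= !mulr0 subr0. Qed.

Lemma quad_ext (T : finType) (rho sigma : op R T) f g :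
  (forall s t, rho s t = sigma s t) -> quad rho f g = quad sigma f g.
Proof.
by move=> E; rewrite /quad; apply: eq_bigr => s _; apply: eq_bigr => t _; rewrite E.
Qed.

Lemma quad_id (T : finType) (f g : T -> C) :
  quad (fun s t => (s == t)%:R) f g = ip f g.
Proof.
rewrite /quad /ip; apply: eq_bigr => s _.
rewrite (bigD1 s) //= eqxx mulr1 big1 ?addr0 // => t /negPf; rewrite eq_sym => ->.
by rewrite mulr0 mul0r.
Qed.

Lemma quad_spec (T : finType) (rho : op R T) f g : herm rho ->
  quad rho f g = \sum_l evl rho l * ip f (evec rho l) * ip (evec rho l) g.
Proof.
move=> h; rewrite -quad_sum; apply: quad_ext => s t; exact: spec_decomp.
Qed.

Lemma diag_jensen (T J : finType) (rho : op R T) (f : J -> T -> C) :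
  herm rho -> (forall l, 0 <= evl rho l) ->
  (forall j j', ip (f j) (f j') = (j == j')%:R) ->
  (forall s t, \sum_j f j s * (f j t)^* = (s == t)%:R) ->
  \sum_j eta (complex.Re (quad rho (f j) (f j))) <= \sum_l eta (complex.Re (evl rho l)).
Proof.
move=> h pos orth compl.
pose e := evec rho; pose lam := evl rho.
pose W l j := complex.Re (`|ip (f j) (e l)| ^+ 2).
have W0 l j : 0 <= W l j by apply: ge0_Re; rewrite exprn_ge0.
have Wc l j : `|ip (f j) (e l)| ^+ 2 = ((W l j)%:C)%C by apply: ge0_ReE; rewrite exprn_ge0.
have lc l : lam l = ((complex.Re (lam l))%:C)%C by exact: ge0_ReE.
have l0 l : 0 <= complex.Re (lam l) by exact: ge0_Re.
have Q j : complex.Re (quad rho (f j) (f j)) = \sum_l W l j * complex.Re (lam l).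
  rewrite quad_spec // Re_sum; apply: eq_bigr => l _.
  rewrite -mulrA -{1}[ip (evec rho l) (f j)]conjCK -ipC -normCK.
  by rewrite -/e -/lam Wc lc ReM_real mulrC.
have S1 j : \sum_l W l j = 1.
  rewrite -Re_sum (eq_bigr (fun l => 1 * ip (f j) (e l) * ip (e l) (f j))); last first.
    by move=> l _; rewrite mul1r normCK ipC conjCK.
  rewrite -(quad_sum (fun _ => 1) e (f j) (f j)) (quad_ext (sigma := fun s t => (s == t)%:R)); last first.
    by move=> s t; rewrite -(evec_compl rho); apply: eq_bigr => l _; rewrite mul1r.
  by rewrite quad_id orth eqxx.
have S2 l : \sum_j W l j = 1.
  rewrite -Re_sum (eq_bigr (fun j => 1 * ip (e l) (f j) * ip (f j) (e l))); last first.
    by move=> j _; rewrite mul1r normCK -ipC mulrC.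
  rewrite -(quad_sum (fun _ => 1) f (e l) (e l)) (quad_ext (sigma := fun s t => (s == t)%:R)); last first.
    by move=> s t; rewrite -(compl s t); apply: eq_bigr => j _; rewrite mul1r.
  by rewrite quad_id /ip /e evec_orth eqxx.
have : \sum_j eta (\sum_l W l j * complex.Re (lam l)) <= \sum_j \sum_l W l j * eta (complex.Re (lam l)).
  by apply: ler_sum => j _; apply: jensen.
rewrite exchange_big /=.
rewrite (eq_bigr (fun l => eta (complex.Re (lam l)))); last first.
  by move=> l _; rewrite -mulr_suml S2 mul1r.
move=> H; apply: le_trans H; rewrite le_eqVlt; apply/orP; left; apply/eqP.
by apply: eq_bigr => j _; rewrite Q.
Qed.

End DJ.

Import Order.TTheory GRing.Theory Num.Theory.

Section Block.
Variable R : realType.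
Local Notation C := (R[i]).

Lemma ent_block (I T : finType) (beta : I -> op R T) :
  (forall i, herm (beta i)) -> (forall i l, 0 <= evl (beta i) l) ->
  vN_entropy (fun u u' : I * T => (u.1 == u'.1)%:R * beta u.1 u.2 u'.2)
  = \sum_i vN_entropy (beta i).
Proof.
move=> hb pb.
pose lam (p : I * 'I_#|T|) := evl (beta p.1) p.2.
pose w (p : I * 'I_#|T|) (u : I * T) : C := (u.1 == p.1)%:R * evec (beta p.1) p.2 u.2.
rewrite (vN_ext (sigma := fun u u' => \sum_p lam p * w p u * (w p u')^*)).
  rewrite ent_orth.
  - rewrite sum_pair -sumrN; apply: eq_bigr => i _.
    by rewrite /vN_entropy /eta.
  - by move=> p; apply: pb.
  - move=> [i l] [i' l']; rewrite /ip sum_pair /=.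
    rewrite (eq_bigr (fun j => (j == i)%:R * ((i == i')%:R *
        \sum_t (evec (beta i) l t)^* * evec (beta i') l' t))); last first.
      move=> j _; case: (eqVneq j i) => [->|ne].
        rewrite mul1r mulr_sumr; apply: eq_bigr => t _.
        by rewrite /w /= eqxx mul1r; ring.
      rewrite mul0r; apply: big1 => t _.
      by rewrite /w /= (negPf ne) mul0r rmorph0 mul0r.
    rewrite sum_delta; case: (eqVneq i i') => [<-|ne].
      by rewrite evec_orth mul1r xpair_eqE eqxx.
    by rewrite mul0r xpair_eqE (negPf ne).
move=> [i1 t1] [i2 t2] /=; rewrite sum_pair.
rewrite (eq_bigr (fun i => (i == i1)%:R * ((i1 == i2)%:R * beta i1 t1 t2))).
  by rewrite sum_delta.
move=> i _; case: (eqVneq i i1) => [->|ne].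
  rewrite mul1r (spec_decomp (hb i1)) mulr_sumr; apply: eq_bigr => l _.
  rewrite /w /lam /= eqxx mul1r rmorphM /= rmorph_nat eq_sym; ring.
rewrite mul0r; apply: big1 => l _.
by rewrite /w /= eq_sym (negPf ne) mul0r mulr0 mul0r.
Qed.

End Block.

Import Order.TTheory GRing.Theory Num.Theory.

Section Ineqs.
Variable R : realType.
Local Notation C := (R[i]).

Lemma quad_delta (T : finType) (rho : op R T) j k :
  quad rho (fun u => (u == j)%:R) (fun u => (u == k)%:R) = rho j k.
Proof.
rewrite /quad (eq_bigr (fun s => (s == j)%:R * rho s k)).
  by rewrite sum_delta.
move=> s _; rewrite (eq_bigr (fun t => (t == k)%:R * ((s == j)%:R * rho s t))).
  by rewrite sum_delta.
by move=> t _; rewrite rmorph_nat mulrC.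
Qed.

Lemma delta_orth (T : finType) (j j' : T) :
  ip (fun u => (u == j)%:R) (fun u => (u == j')%:R) = (j == j')%:R :> C.
Proof.
rewrite /ip (eq_bigr (fun u => (u == j)%:R * (u == j')%:R)) ?sum_delta //.
by move=> u _; rewrite rmorph_nat.
Qed.

Lemma delta_compl (T : finType) (s t : T) :
  \sum_j (s == j)%:R * ((t == j)%:R)^* = (s == t)%:R :> C.
Proof.
rewrite (eq_bigr (fun j => (j == s)%:R * (t == j)%:R)).
  by rewrite sum_delta eq_sym.
by move=> j _; rewrite rmorph_nat eq_sym.
Qed.

Lemma quad_outer (K T : finType) (w : K -> T -> C) f :
  quad (outer w) f f = \sum_k `|ip f (w k)| ^+ 2.
Proof.
have := quad_sum (fun _ => 1) w f f.
have -> : quad (fun s t => \sum_k (fun _ => 1) k * w k s * (w k t)^*) f f = quad (outer w) f f.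
  by apply: quad_ext => s t; apply: eq_bigr => k _; rewrite mul1r.
move=> ->; apply: eq_big => // k _; by rewrite mul1r normCK ipC conjCK.
Qed.

Lemma quad_sumop (I T : finType) (P : I -> op R T) f g :
  quad (fun s t => \sum_i P i s t) f g = \sum_i quad (P i) f g.
Proof.
rewrite /quad; symmetry; rewrite exchange_big; apply: eq_bigr => s _.
rewrite exchange_big; apply: eq_bigr => t _.
by rewrite mulr_sumr mulr_suml.
Qed.

Lemma trace_quad (T J : finType) (rho : op R T) (f : J -> T -> C) :
  (forall s t, \sum_j f j s * (f j t)^* = (s == t)%:R) ->
  \sum_j quad rho (f j) (f j) = \sum_t rho t t.
Proof.
move=> compl; rewrite /quad exchange_big; apply: eq_bigr => s _.
rewrite exchange_big (eq_bigr (fun t => (t == s)%:R * rho s t)).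
  by rewrite sum_delta.
move=> t _; rewrite -compl mulr_suml; apply: eq_bigr => j _; ring.
Qed.

Lemma mix_sub (I K T : finType) (v : I -> K -> T -> C) :
  vN_entropy (fun s t => \sum_i outer (v i) s t) <= \sum_i vN_entropy (outer (v i)).
Proof.
pose P i := outer (v i).
pose y (p : I * 'I_#|T|) t := sqrtC (evl (P p.1) p.2) * evec (P p.1) p.2 t.
rewrite (vN_ext (sigma := outer y)); last first.
  move=> s t; rewrite [RHS]/outer sum_pair; apply: eq_bigr => i _.
  rewrite (spec_decomp (herm_outer (v i))); apply: eq_bigr => l _.
  rewrite /y /= rmorphM /= [(sqrtC _)^*]geC0_conj ?sqrtC_ge0 ?evl_outer_ge0 //.
  by rewrite -{1}[evl _ _]sqrtCK; ring.
rewrite ent_outer_gram.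
pose z t p := (y p t)^*.
rewrite (vN_ext (sigma := outer z)); last first.
  by move=> p p'; rewrite /gram /outer; apply: eq_bigr => t _; rewrite /z conjCK.
have := diag_jensen (f := fun j u => (u == j)%:R) (herm_outer z) (@evl_outer_ge0 _ _ _ z)
  (@delta_orth _) (@delta_compl _).
rewrite (eq_bigr (fun p => eta (complex.Re (evl (P p.1) p.2)))); last first.
  move=> p _; rewrite quad_delta /outer /z.
  rewrite (eq_bigr (fun t => (sqrtC (evl (P p.1) p.2))^* * sqrtC (evl (P p.1) p.2) *
     ((evec (P p.1) p.2 t)^* * evec (P p.1) p.2 t))); last first.
    by move=> t _; rewrite conjCK /y rmorphM; ring.
  rewrite -mulr_sumr evec_orth eqxx mulr1 geC0_conj ?sqrtC_ge0 ?evl_outer_ge0 //.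
  by rewrite -expr2 sqrtCK.
rewrite sum_pair => H.
rewrite /vN_entropy sumrN lerN2; exact: H.
Qed.

End Ineqs.

Import Order.TTheory GRing.Theory Num.Theory.

Section Concav.
Variable R : realType.
Local Notation C := (R[i]).

Lemma concav (I K T : finType) (v : I -> K -> T -> C) (p : I -> R) :
  (forall i, p i = complex.Re (\sum_t outer (v i) t t)) -> \sum_i p i = 1 ->
  \sum_i vN_entropy (outer (v i))
  <= vN_entropy (fun s t => \sum_i outer (v i) s t) - \sum_i eta (p i).
Proof.
move=> pE p1.
pose Q : op R T := fun s t => \sum_i outer (v i) s t.
pose vv (ik : I * K) := v ik.1 ik.2.
have Qo s t : Q s t = outer vv s t.
  by rewrite /Q /outer sum_pair.
have hQ : herm Q by move=> s t; rewrite !Qo; exact: herm_outer.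
have pQ l : 0 <= evl Q l by rewrite /evl (opmx_ext Qo); exact: evl_outer_ge0.
pose f := evec Q.
pose d i j := complex.Re (quad (outer (v i)) (f j) (f j)).
have d0 i j : 0 <= d i j.
  by apply: ge0_Re; rewrite quad_outer; apply: sumr_ge0 => k _; rewrite exprn_ge0.
have fo j j' : ip (f j) (f j') = (j == j')%:R by exact: evec_orth.
have fc s t : \sum_j f j s * (f j t)^* = (s == t)%:R by exact: evec_compl.
have DJ i : \sum_j eta (d i j) <= - vN_entropy (outer (v i)).
  rewrite /vN_entropy opprK.
  exact: (diag_jensen (herm_outer (v i)) (@evl_outer_ge0 _ _ _ (v i)) fo fc).
have dq j : \sum_i d i j = complex.Re (evl Q j).
  by rewrite -Re_sum -quad_sumop -/Q quad_evl.
have dp i : \sum_j d i j = p i.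
  by rewrite -Re_sum trace_quad // pE.
have SA := subadd d0 (etrans (eq_bigr _ (fun i _ => dp i)) p1).
have e1 : \sum_i eta (\sum_j d i j) = \sum_i eta (p i) by apply: eq_bigr => i _; rewrite dp.
have e2 : \sum_j eta (\sum_i d i j) = \sum_j eta (complex.Re (evl Q j)) by apply: eq_bigr => j _; rewrite dq.
rewrite e1 e2 in SA.
have : \sum_i \sum_j eta (d i j) <= \sum_i - vN_entropy (outer (v i)).
  by apply: ler_sum => i _; exact: DJ.
rewrite sumrN => H.
have HQ : vN_entropy Q = - \sum_j eta (complex.Re (evl Q j)) by [].
rewrite -/Q HQ; lra.
Qed.

End Concav.

Import Order.TTheory GRing.Theory Num.Theory.

Section App.
Variable R : realType.
Local Notation C := (R[i]).
Variables (A B Cs : finType) (k : nat).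
Variables (psi : (A * B * Cs)%type -> C) (M : 'I_k -> op R B).
Hypothesis kraus_complete : forall b1 b2 : B,
        \sum_(i < k) \sum_(b : B) (M i b b1)^* * M i b b2 = (b1 == b2)%:R.

Local Notation v := (apply_kraus M psi).

Lemma KR a c a' c' :
  \sum_i \sum_b (v i (a, b, c))^* * v i (a', b, c')
  = \sum_b (psi (a, b, c))^* * psi (a', b, c').
Proof.
have E i b : (v i (a, b, c))^* * v i (a', b, c')
   = \sum_b0 \sum_b1 ((M i b b0)^* * M i b b1) * ((psi (a, b0, c))^* * psi (a', b1, c')).
  rewrite /apply_kraus /= rmorph_sum big_distrlr /=; apply: eq_bigr => b0 _.
  by apply: eq_bigr => b1 _; rewrite rmorphM; ring.
rewrite (eq_bigr (fun i => \sum_b \sum_b0 \sum_b1 ((M i b b0)^* * M i b b1) * ((psi (a, b0, c))^* * psi (a', b1, c')))); last first.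
  by move=> i _; apply: eq_bigr => b _; exact: E.
rewrite (eq_bigr (fun i => \sum_b0 \sum_b \sum_b1 ((M i b b0)^* * M i b b1) * ((psi (a, b0, c))^* * psi (a', b1, c')))); last first.
  by move=> i _; rewrite exchange_big.
rewrite exchange_big; apply: eq_bigr => b0 _.
rewrite (eq_bigr (fun i => \sum_b1 \sum_b ((M i b b0)^* * M i b b1) * ((psi (a, b0, c))^* * psi (a', b1, c')))); last first.
  by move=> i _; rewrite exchange_big.
rewrite exchange_big.
rewrite (eq_bigr (fun b1 => (b1 == b0)%:R * ((psi (a, b0, c))^* * psi (a', b1, c')))).
  by rewrite sum_delta.
move=> b1 _; rewrite eq_sym -(kraus_complete b0 b1) !mulr_suml; apply: eq_bigr => i _.
by rewrite mulr_suml.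
Qed.

Definition wC (phi : A * B * Cs -> C) : (A * B)%type -> Cs -> C :=
  fun ab c => (phi (ab.1, ab.2, c))^*.
Definition wA (phi : A * B * Cs -> C) : (B * Cs)%type -> A -> C :=
  fun bc a => (phi (a, bc.1, bc.2))^*.
Definition wAC (phi : A * B * Cs -> C) : B -> (A * Cs)%type -> C :=
  fun b ac => (phi (ac.1, b, ac.2))^*.

Lemma outer_wC phi c c' :
  outer (wC phi) c c' = \sum_a \sum_b (phi (a, b, c))^* * phi (a, b, c').
Proof. by rewrite /outer /wC sum_pair; apply: eq_bigr => a _; apply: eq_bigr => b _; rewrite conjCK. Qed.

Lemma outer_wA phi a a' :
  outer (wA phi) a a' = \sum_c \sum_b (phi (a, b, c))^* * phi (a', b, c).
Proof.
rewrite /outer /wA sum_pair exchange_big.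
by apply: eq_bigr => c _; apply: eq_bigr => b _; rewrite conjCK.
Qed.

Lemma outer_wAC phi ac ac' :
  outer (wAC phi) ac ac' = \sum_b (phi (ac.1, b, ac.2))^* * phi (ac'.1, b, ac'.2).
Proof. by rewrite /outer /wAC; apply: eq_bigr => b _; rewrite conjCK. Qed.

Lemma sumC c c' : outer (wC psi) c c' = \sum_i outer (wC (v i)) c c'.
Proof.
rewrite outer_wC (eq_bigr (fun i => \sum_a \sum_b (v i (a, b, c))^* * v i (a, b, c'))); last first.
  by move=> i _; rewrite outer_wC.
by rewrite [RHS]exchange_big; apply: eq_bigr => a _; rewrite KR.
Qed.

Lemma sumA a a' : outer (wA psi) a a' = \sum_i outer (wA (v i)) a a'.
Proof.
rewrite outer_wA (eq_bigr (fun i => \sum_c \sum_b (v i (a, b, c))^* * v i (a', b, c))); last first.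
  by move=> i _; rewrite outer_wA.
by rewrite [RHS]exchange_big; apply: eq_bigr => c _; rewrite KR.
Qed.

Lemma sumAC ac ac' : outer (wAC psi) ac ac' = \sum_i outer (wAC (v i)) ac ac'.
Proof.
rewrite outer_wAC (eq_bigr (fun i => \sum_b (v i (ac.1, b, ac.2))^* * v i (ac'.1, b, ac'.2))); last first.
  by move=> i _; rewrite outer_wAC.
by rewrite KR.
Qed.

Lemma sum_triple (F : A * B * Cs -> C) :
  \sum_t F t = \sum_a \sum_b \sum_c F (a, b, c).
Proof.
rewrite sum_pair sum_pair; apply: eq_bigr => a _; by apply: eq_bigr => b _.
Qed.

Lemma trC phi : \sum_c outer (wC phi) c c = \sum_t `|phi t| ^+ 2.
Proof.
rewrite sum_triple (eq_bigr (fun c => \sum_a \sum_b (phi (a, b, c))^* * phi (a, b, c))); last first.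
  by move=> c _; rewrite outer_wC.
rewrite exchange_big; apply: eq_bigr => a _; rewrite exchange_big.
by apply: eq_bigr => b _; apply: eq_bigr => c _; rewrite normCKC.
Qed.

Lemma trA phi : \sum_a outer (wA phi) a a = \sum_t `|phi t| ^+ 2.
Proof.
rewrite sum_triple; apply: eq_bigr => a _; rewrite outer_wA exchange_big.
by apply: eq_bigr => b _; apply: eq_bigr => c _; rewrite normCKC.
Qed.

End App.

Import Order.TTheory GRing.Theory Num.Theory.

Section App2.
Variable R : realType.
Local Notation C := (R[i]).

Lemma delta2 (I : finType) (x y : I) (a b : I -> C) :
  \sum_i ((x == i)%:R * a i) * ((y == i)%:R * b i)^* = if x == y then a x * (b y)^* else 0.
Proof.
rewrite (eq_bigr (fun i => (i == x)%:R * ((y == x)%:R * (a x * (b x)^*)))); last first.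
  move=> i _; case: (eqVneq i x) => [->|ne].
    by rewrite ?eqxx rmorphM /= rmorph_nat; ring.
  by rewrite !mul0r.
rewrite sum_delta; case: (eqVneq x y) => [<-|ne]; first by rewrite ?eqxx mul1r.
by rewrite mul0r.
Qed.

Lemma delta3 (I : finType) (x y : I) (a b : I -> C) :
  \sum_j ((j == x)%:R * a j)^* * ((j == y)%:R * b j) = (x == y)%:R * ((a x)^* * b x).
Proof.
rewrite (eq_bigr (fun j => (j == x)%:R * ((x == y)%:R * ((a x)^* * b x)))); last first.
  move=> j _; case: (eqVneq j x) => [->|ne].
    by rewrite ?eqxx rmorphM /= rmorph_nat; ring.
  by rewrite !mul0r ?rmorph0 ?mul0r.
by rewrite sum_delta.
Qed.

Variables (A B Cs : finType) (k : nat).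
Variables (psi : (A * B * Cs)%type -> C) (M : 'I_k -> op R B).
Local Notation v := (apply_kraus M psi).
Local Notation post := (post_meas_state M psi).

Lemma sum_post (F : A * (B * 'I_k) * Cs -> C) :
  \sum_s F s = \sum_a \sum_b \sum_c \sum_j F (a, (b, j), c).
Proof.
rewrite sum_pair sum_pair; apply: eq_bigr => a _; rewrite sum_pair.
by apply: eq_bigr => b _; rewrite exchange_big.
Qed.

Lemma sum_XY (F : A * (B * 'I_k) -> C) :
  \sum_u F u = \sum_a \sum_b \sum_j F (a, (b, j)).
Proof. by rewrite sum_pair; apply: eq_bigr => a _; rewrite sum_pair. Qed.

Lemma sum_YZ (F : (B * 'I_k) * Cs -> C) :
  \sum_u F u = \sum_b \sum_c \sum_j F ((b, j), c).
Proof. by rewrite sum_pair sum_pair; apply: eq_bigr => b _; rewrite exchange_big. Qed.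

Definition U (i : 'I_k) (s : A * (B * 'I_k) * Cs) : C :=
  (s.1.2.2 == i)%:R * v i (s.1.1, s.1.2.1, s.2).

Lemma ent_post : vN_entropy post = - \sum_i eta (outcome_prob M psi i).
Proof.
rewrite (vN_ext (sigma := outer U)); last first.
  by move=> s t; rewrite /outer /U delta2.
rewrite ent_outer_gram (vN_ext (sigma := fun i i' => (i == i')%:R * \sum_t `|v i t| ^+ 2)).
  by rewrite ent_diag.
move=> i i'; rewrite /gram /U sum_post sum_triple mulr_sumr; apply: eq_bigr => a _.
rewrite mulr_sumr; apply: eq_bigr => b _; rewrite mulr_sumr; apply: eq_bigr => c _.
rewrite (delta3 i i' (fun _ => v i (a, b, c)) (fun _ => v i' (a, b, c))).
case: eqP => [->|_]; last by rewrite !mul0r.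
by rewrite normCKC.
Qed.

End App2.

Import Order.TTheory GRing.Theory Num.Theory.

Section App3.
Variable R : realType.
Local Notation C := (R[i]).
Variables (A B Cs : finType) (k : nat).
Variables (psi : (A * B * Cs)%type -> C) (M : 'I_k -> op R B).
Local Notation v := (apply_kraus M psi).
Local Notation post := (post_meas_state M psi).


Definition X (ic : 'I_k * Cs) (u : A * (B * 'I_k)) : C :=
  (u.2.2 == ic.1)%:R * v ic.1 (u.1, u.2.1, ic.2).

Lemma ent_XY : vN_entropy (ptr_XY post) = \sum_i vN_entropy (outer (wC (v i))).
Proof.
rewrite (vN_ext (sigma := outer X)); last first.
  move=> u u'; rewrite /outer /ptr_XY sum_pair exchange_big; apply: eq_bigr => c _.
  by rewrite /X /= delta2.
rewrite ent_outer_gram.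
rewrite (vN_ext (sigma := fun p p' => (p.1 == p'.1)%:R * outer (wC (v p.1)) p.2 p'.2)); last first.
  move=> [i c] [i' c']; rewrite /gram /X sum_XY outer_wC mulr_sumr; apply: eq_bigr => a _.
  rewrite mulr_sumr; apply: eq_bigr => b _ /=.
  rewrite (delta3 i i' (fun _ => v i (a, b, c)) (fun _ => v i' (a, b, c'))).
  by case: eqP => [->|_] //; rewrite !mul0r.
apply: ent_block => i; [exact: herm_outer | exact: evl_outer_ge0].
Qed.

Definition Y (ia : 'I_k * A) (u : (B * 'I_k) * Cs) : C :=
  (u.1.2 == ia.1)%:R * v ia.1 (ia.2, u.1.1, u.2).

Lemma ent_YZ : vN_entropy (ptr_YZ post) = \sum_i vN_entropy (outer (wA (v i))).
Proof.
rewrite (vN_ext (sigma := outer Y)); last first.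
  move=> u u'; rewrite /outer /ptr_YZ sum_pair exchange_big; apply: eq_bigr => a _.
  by rewrite /Y /= delta2.
rewrite ent_outer_gram.
rewrite (vN_ext (sigma := fun p p' => (p.1 == p'.1)%:R * outer (wA (v p.1)) p.2 p'.2)); last first.
  move=> [i a] [i' a']; rewrite /gram /Y sum_YZ outer_wA [in RHS]exchange_big mulr_sumr; apply: eq_bigr => b _.
  rewrite mulr_sumr; apply: eq_bigr => c _ /=.
  rewrite (delta3 i i' (fun _ => v i (a, b, c)) (fun _ => v i' (a', b, c))).
  by case: eqP => [->|_] //; rewrite !mul0r.
apply: ent_block => i; [exact: herm_outer | exact: evl_outer_ge0].
Qed.

Definition Z (p : 'I_k * (A * Cs)) (u : B * 'I_k) : C :=
  (u.2 == p.1)%:R * v p.1 (p.2.1, u.1, p.2.2).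

Lemma ent_Y : vN_entropy (ptr_Y post) = \sum_i vN_entropy (outer (wAC (v i))).
Proof.
rewrite (vN_ext (sigma := outer Z)); last first.
  move=> u u0; rewrite /outer /ptr_Y sum_pair [RHS]exchange_big [RHS]sum_pair.
  apply: eq_bigr => a _; apply: eq_bigr => c _.
  by rewrite /Z /= delta2.
rewrite ent_outer_gram.
rewrite (vN_ext (sigma := fun p p' => (p.1 == p'.1)%:R * outer (wAC (v p.1)) p.2 p'.2)); last first.
  move=> [i [a c]] [i' [a' c']]; rewrite /gram /Z sum_pair outer_wAC mulr_sumr; apply: eq_bigr => b _ /=.
  rewrite (delta3 i i' (fun _ => v i (a, b, c)) (fun _ => v i' (a', b, c'))).
  by case: eqP => [->|_] //; rewrite !mul0r.
apply: ent_block => i; [exact: herm_outer | exact: evl_outer_ge0].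
Qed.

End App3.

Import Order.TTheory GRing.Theory Num.Theory.

Section App4.
Variable R : realType.
Local Notation C := (R[i]).
Variables (A B Cs : finType).
Variables (psi : (A * B * Cs)%type -> C).

Lemma entP_XY : vN_entropy (ptr_XY (ketbra psi)) = vN_entropy (outer (wC psi)).
Proof.
rewrite (vN_ext (sigma := outer (fun c u => psi (u, c)))) //.
rewrite ent_outer_gram; apply: vN_ext => c c'.
rewrite /gram /outer /wC; apply: eq_bigr => -[a b] _ /=.
by rewrite conjCK.
Qed.

Lemma entP_YZ : vN_entropy (ptr_YZ (ketbra psi)) = vN_entropy (outer (wA psi)).
Proof.
rewrite (vN_ext (sigma := outer (fun a (u : B * Cs) => psi (a, u.1, u.2)))) //.
rewrite ent_outer_gram; apply: vN_ext => a a'.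
rewrite /gram /outer /wA; apply: eq_bigr => -[b c] _ /=.
by rewrite conjCK.
Qed.

Lemma entP_Y : vN_entropy (ptr_Y (ketbra psi)) = vN_entropy (outer (wAC psi)).
Proof.
rewrite (vN_ext (sigma := outer (fun (ac : A * Cs) b => psi (ac.1, b, ac.2)))); last first.
  by move=> b b'; rewrite /outer /ptr_Y sum_pair.
rewrite ent_outer_gram; apply: vN_ext => ac ac'.
rewrite /gram /outer /wAC; apply: eq_bigr => b _ /=.
by rewrite conjCK.
Qed.

Lemma entP : \sum_t `|psi t| ^+ 2 = 1 -> vN_entropy (ketbra psi) = 0.
Proof.
move=> n1.
rewrite (vN_ext (sigma := outer (fun _ : 'I_1 => psi))); last first.
  by move=> s t; rewrite /outer big_ord1.
rewrite ent_outer_gram (vN_ext (sigma := fun i i' => (i == i')%:R * 1)).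
  by rewrite ent_diag big_ord1 /eta /= ln1 mulr0 oppr0.
move=> i i'; rewrite !ord1 eqxx mul1r /gram -n1.
by apply: eq_bigr => t _; rewrite normCKC.
Qed.

End App4.

End Helpers.
Import Helpers.

Theorem mainTheorem5 (R : realType) (A B Cs : finType) (k : nat)
    (psi : (A * B * Cs)%type -> R[i]) (M : 'I_k -> op R B)
    (psi_normalized : \sum_(t : (A * B * Cs)%type) `|psi t| ^+ 2 = 1)
    (kraus_complete : forall b1 b2 : B,
        \sum_(i < k) \sum_(b : B) (M i b b1)^* * M i b b2
        = (b1 == b2)%:R) :
  let rho := post_meas_state M psi in
  let p := outcome_prob M psi in
  qcmi rho - qcmi (ketbra psi) <= vN_entropy rho /\
  vN_entropy rho = - \sum_(i < k) p i * ln (p i).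
Proof.
move=> rho p.
have Hpost : vN_entropy rho = - \sum_i eta (p i) := ent_post psi M.
split; last exact: Hpost.
have pE i : p i = complex.Re (\sum_t outer (wC (apply_kraus M psi i)) t t).
  by rewrite trC.
have pEA i : p i = complex.Re (\sum_t outer (wA (apply_kraus M psi i)) t t).
  by rewrite trA.
have p1 : \sum_i p i = 1.
  rewrite (eq_bigr _ (fun i _ => pE i)) -Re_sum exchange_big.
  rewrite (eq_bigr (fun c => outer (wC psi) c c)); last first.
    by move=> c _; rewrite (sumC psi kraus_complete).
  by rewrite trC psi_normalized.
have I1C := concav pE p1.
have I1A := concav pEA p1.
have I2 := mix_sub (fun i => wAC (apply_kraus M psi i)).
have EC : vN_entropy (outer (wC psi)) = vN_entropy (fun s t => \sum_i outer (wC (apply_kraus M psi i)) s t).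
  by apply: vN_ext => s t; exact: (sumC psi kraus_complete).
have EA : vN_entropy (outer (wA psi)) = vN_entropy (fun s t => \sum_i outer (wA (apply_kraus M psi i)) s t).
  by apply: vN_ext => s t; exact: (sumA psi kraus_complete).
have EAC : vN_entropy (outer (wAC psi)) = vN_entropy (fun s t => \sum_i outer (wAC (apply_kraus M psi i)) s t).
  by apply: vN_ext => s t; exact: (sumAC psi kraus_complete).
rewrite /qcmi /rho ent_XY ent_YZ ent_Y entP_XY entP_YZ entP_Y entP // -/rho Hpost EC EA EAC.
lra.
Qed.
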